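(* For integers $n\ge1$ and $s\ge0$, the number of binary sequences $(b_1,\dots,b_{(s+2)n+1})$ of length $(s+2)n+1$ such that for every $j\ge1$ the $j$th occurrence of the pattern $10$, if it exists, starts at an index $\ge (s+2)j+1$, and such that there are exactly $2n-1$ indices $i$ with $b_i\ne b_{i+1}$, equals \[ \frac{1}{n}\binom{(s+2)n}{2n-1} = 2\binom{(s+2)n-1}{2n-1} - s\binom{(s+2)n-1}{2n-2}. \] Moreover, no such admissible sequence has more than $2n-1$ indices $i$ with $b_i\ne b_{i+1}$.
   Context: Positions are indexed from $1$; an occurrence of $10$ is a pair of consecutive entries $b_i=1,b_{i+1}=0$, and occurrences are ordered by starting index. *)

(* Defs.v *)
From mathcomp Require Import all_boot.
Set Implicit Arguments. Unset Strict Implicit. Unset Printing Implicit Defensive.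

(* Positions are 1-indexed: b_i := nth false b (i-1), for 1 <= i <= size b. *)
Definition bit (b : seq bool) (i : nat) : bool := nth false b i.-1.

Definition occ10 (b : seq bool) : seq nat :=
  [seq i <- iota 1 (size b).-1 | bit b i && ~~ bit b i.+1].

Definition changes (b : seq bool) : nat :=
  count (fun i => bit b i != bit b i.+1) (iota 1 (size b).-1).

Definition admissibleb (s : nat) (b : seq bool) : bool :=
  all (fun j => (s + 2) * j + 1 <= nth 0 (occ10 b) j.-1)
      (iota 1 (size (occ10 b))).

(* Main.v *)
Require Import Defs.
From Stdlib Require Import Lia.
From mathcomp Require Import all_boot.
Set Implicit Arguments. Unset Strict Implicit. Unset Printing Implicit Defensive.
Ltac tolia :=
  repeat match goal with
  | H : is_true (_ <= _) |- _ => move/leP: H => H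
  | H : is_true (_ == _) |- _ => move/eqP: H => H
  end;
  repeat match goal with
  | H : context [addn] |- _ => rewrite -plusE in H
  | H : context [subn] |- _ => rewrite -minusE in H
  | H : context [muln] |- _ => rewrite -multE in H
  end;
  try (match goal with |- is_true (_ == _) => apply/eqP end); try (apply/leP);
  rewrite -?plusE -?minusE -?multE; lia.

Definition chb b i := bit b i != bit b i.+1.
Definition o10 b i := bit b i && ~~ bit b i.+1.

Lemma iotaS1 t : iota 1 t.+1 = rcons (iota 1 t) t.+1.
Proof. by rewrite -cats1 -(addn1 t) iotaD add1n addn1. Qed.

Lemma half2 c : c.+2./2 = (c./2).+1. Proof. by []. Qed.

Lemma inv10 b t : count (o10 b) (iota 1 t) = (count (chb b) (iota 1 t) + bit b 1)./2
   /\ bit b t.+1 = bit b 1 (+) odd (count (chb b) (iota 1 t)).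
Proof.
elim: t => [|t [IH1 IH2]]; first by case: (bit b 1).
rewrite iotaS1 -!cats1 !count_cat /= !addn0 IH1.
rewrite /o10 /chb IH2.
set c := count _ _; set x := bit b 1.
case: (bit b t.+2) => /=; case: x => /=; case hc: (odd c) => /=.
all: rewrite ?addn0 ?addn1 ?addSn ?half2 -?uphalfE ?uphalf_half ?hc //.
all: split => //; rewrite /= ?hc //.
Qed.
Lemma nth_rot (c : seq bool) x i : x <= size c -> i < size c ->
  nth false (rot x c) i = nth false c ((i + x) %% size c).
Proof.
move=> hx hi; rewrite /rot nth_cat size_drop.
case: ltnP => h.
  rewrite nth_drop modn_small; last by tolia.
  by rewrite addnC.
rewrite nth_take; last by tolia.
have -> : i + x = (i - (size c - x)) + size c by tolia.
rewrite modnDr modn_small //; tolia.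
Qed.
Lemma sorted_nth_count (l : seq nat) T j : sorted ltn l -> j < size l ->
  (T < nth 0 l j) = (count (fun x => x <= T) l <= j).
Proof.
elim: l j => [|x l IH] j //= hs hj.
have hall : all (ltn x) l := order_path_min (@ltn_trans) hs.
have hs' : sorted ltn l by apply: path_sorted hs.
have c0 : T < x -> count (fun y => y <= T) l = 0.
  move=> hTx; apply/eqP; rewrite -leqn0 leqNgt -has_count; apply/hasPn => y /(allP hall) hy.
  by rewrite -ltnNge (ltn_trans hTx hy).
case: j hj => [|j] hj /=.
  case: ltnP => h; first by rewrite c0.
  by [].
case: (ltnP T x) => h.
  rewrite c0 //.
  suff -> : T < nth 0 l j by [].
  apply: (ltn_trans h); apply: (allP hall); apply: mem_nth; by [].
rewrite add1n ltnS IH //.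
Qed.

Lemma count_le_iota (P : pred nat) T K :
  count (fun i => P i && (i <= T)) (iota 1 K) = count P (iota 1 (minn T K)).
Proof.
elim: K => [|K IH]; first by rewrite minn0.
rewrite !iotaS1 -cats1 count_cat IH /=.
case: (leqP K.+1 T) => h.
  by rewrite andbT (minn_idPr (ltnW h)) iotaS1 -cats1 count_cat /= addn0.
have h2 : T <= K := h.
by rewrite andbF addn0 (minn_idPl h2) addn0.
Qed.

Lemma adm_iff s b : admissibleb s b =
  all (fun j => count (fun x => x <= (s+2)*j) (occ10 b) < j) (iota 1 (size (occ10 b))).
Proof.
rewrite /admissibleb; apply: eq_in_all => j; rewrite mem_iota => /andP [hj1 hj2].
case: j hj1 hj2 => [|j] // _ hj2; rewrite /= addn1 sorted_nth_count //.
by apply: sorted_filter; [exact: ltn_trans | exact: iota_ltn_sorted].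
Qed.

Lemma count_occ b T : count (fun x => x <= T) (occ10 b) =
  (count (chb b) (iota 1 (minn T (size b).-1)) + bit b 1)./2.
Proof.
rewrite /occ10 count_filter.
have -> : count (predI (fun x => x <= T) (fun i => bit b i && ~~ bit b i.+1)) (iota 1 (size b).-1)
   = count (fun i => o10 b i && (i <= T)) (iota 1 (size b).-1).
  by apply: eq_count => i /=; rewrite andbC.
by rewrite count_le_iota; case: (inv10 b (minn T (size b).-1)).
Qed.

Lemma size_occ b : size (occ10 b) = (changes b + bit b 1)./2.
Proof.
rewrite -(count_predT (occ10 b)).
have -> : count predT (occ10 b) = count (fun x => x <= size b) (occ10 b).
  apply: eq_in_count => x; rewrite mem_filter mem_iota => /andP [_ /andP [h0 h]].
  apply/esym; apply: (leq_trans (ltnW h)); rewrite add1n; case: (size b) h h0 => //= h h0.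
  by case: x h h0.
have H := count_occ b (size b).
rewrite (minn_idPr (leq_pred _)) in H; exact: H.
Qed.

Lemma occ_lt s n b : 1 <= n -> size b = (s + 2) * n + 1 -> admissibleb s b ->
  size (occ10 b) < n.
Proof.
move=> hn hb hadm; rewrite ltnNge; apply/negP => hle.
have hj : n \in iota 1 (size (occ10 b)) by rewrite mem_iota hn add1n ltnS.
have := allP hadm n hj => /= h1.
have hmem : nth 0 (occ10 b) n.-1 \in occ10 b.
  by apply: mem_nth; rewrite prednK.
move: hmem; rewrite mem_filter mem_iota hb addn1 /= add1n => /andP [_ /andP [_ h2]].
by move: (leq_trans h1 h2); rewrite addn1 ltnn.
Qed.

Lemma part2 s n b : 1 <= n -> size b = (s + 2) * n + 1 -> admissibleb s b ->
  changes b <= 2 * n - 1.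
Proof.
move=> hn hb hadm; have := occ_lt hn hb hadm; rewrite size_occ ltn_half_double.
move=> h; have h' : changes b < n.*2 by apply: leq_trans h; rewrite ltnS leq_addr.
rewrite -muln2 mulnC in h'; move: h' hn; clear; move=> h' hn; tolia.
Qed.

Definition db (b : seq bool) := [seq chb b i | i <- iota 1 (size b).-1].
Definition gb (c : seq bool) := mkseq (fun p => odd (count id (take p c))) (size c).+1.

Lemma size_db b : size (db b) = (size b).-1.
Proof. by rewrite size_map size_iota. Qed.

Lemma changes_db b : changes b = count id (db b).
Proof. by rewrite count_map. Qed.

Lemma count_take_db b i : count id (take i (db b)) = count (chb b) (iota 1 (minn i (size b).-1)).
Proof. by rewrite -map_take take_iota count_map. Qed.

Lemma size_gb c : size (gb c) = (size c).+1.
Proof. by rewrite size_mkseq. Qed.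

Lemma bit_gb c p : p <= size c -> bit (gb c) p.+1 = odd (count id (take p c)).
Proof. by move=> hp; rewrite /bit /= nth_mkseq. Qed.

Lemma bit_gb1 c : bit (gb c) 1 = false.
Proof. by rewrite bit_gb // take0. Qed.

Lemma db_gb c : db (gb c) = c.
Proof.
apply: (@eq_from_nth _ false); first by rewrite size_db size_gb.
move=> i; rewrite size_db size_gb /= => hi.
rewrite (nth_map 0) ?size_iota ?size_gb // nth_iota // add1n /chb !bit_gb // ?(ltnW hi) //.
rewrite (take_nth false hi) -cats1 count_cat /= addn0 oddD.
by case: (odd _); case: (nth _ _ _).
Qed.

Lemma gb_db b : bit b 1 = false -> 0 < size b -> gb (db b) = b.
Proof.
move=> h1 hs.
apply: (@eq_from_nth _ false); first by rewrite size_gb size_db prednK.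
move=> i; rewrite size_gb size_db prednK // => hi.
rewrite /gb nth_mkseq ?size_db ?prednK // count_take_db (minn_idPl _); last first.
  by rewrite -ltnS prednK.
case: (inv10 b i) => _; rewrite h1 /= /bit /= => <-.
by [].
Qed.

Definition goodc s n (c : seq bool) :=
  all (fun j => count id (take ((s+2)*j) c) < 2*j) (iota 1 n).

Lemma hhalf n : 0 < n -> 2 * n - 1 = (n.-1).*2.+1.
Proof. by case: n => // n _; rewrite -muln2 mulnC mulSn add2n subSS subn0 /= muln2. Qed.

Lemma charA s n b : 1 <= n -> size b = (s+2)*n + 1 ->
  (admissibleb s b && (changes b == 2*n-1)) =
  [&& bit b 1 == false, count id (db b) == 2*n-1 & goodc s n (db b)].
Proof.
move=> hn hb.
have hK : (size b).-1 = (s+2)*n by rewrite hb addn1.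
have hmin : forall j, j <= n -> minn ((s+2)*j) (size b).-1 = (s+2)*j.
  by move=> j hj; rewrite hK; apply/minn_idPl; rewrite leq_mul2l hj orbT.
have hs : size (occ10 b) = (2 * n - 1 + bit b 1)./2 -> bit b 1 = false ->
   size (occ10 b) = n.-1.
  by move=> -> ->; rewrite addn0 hhalf // -uphalfE uphalf_double.
apply/idP/idP.
  move=> /andP [hadm hch].
  have hlt := occ_lt hn hb hadm.
  move: (size_occ b); rewrite (eqP hch) => hsz.
  have hx : bit b 1 = false.
    case hx: (bit b 1) => //; move: hlt; rewrite hsz hx addn1 hhalf //.
    by rewrite half2 doubleK prednK // ltnn.
  rewrite hx eqxx -changes_db hch /=.
  apply/allP => j; rewrite mem_iota add1n ltnS => /andP [hj1 hj2].
  rewrite count_take_db hmin //.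
  case: (ltnP j n) => hjn; last first.
    have -> : j = n by apply/eqP; rewrite eqn_leq hj2 hjn.
    rewrite -hK.
    have -> : count (chb b) (iota 1 (size b).-1) = changes b by [].
    by rewrite (eqP hch) subn1 prednK ?muln_gt0 ?hn //.
  move: hadm; rewrite adm_iff => /allP /(_ j).
  rewrite mem_iota hj1 add1n ltnS (hs hsz hx) -ltnS prednK // hjn => /(_ isT).
  rewrite count_occ hmin ?(ltnW hjn) // hx addn0 ltn_half_double.
  by rewrite -muln2 (mulnC j 2).
move=> /and3P [/eqP hx hc hg].
rewrite changes_db hc andbT adm_iff.
have hsz := size_occ b; rewrite changes_db (eqP hc) in hsz.
apply/allP => j; rewrite mem_iota (hs hsz hx) add1n ltnS => /andP [hj1 hj2].
have hjn : j <= n by apply: (leq_trans hj2); apply: leq_pred.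
rewrite count_occ hmin // hx addn0 ltn_half_double -muln2 (mulnC j 2).
move: (allP hg j); rewrite mem_iota hj1 add1n ltnS hjn => /(_ isT).
by rewrite count_take_db hmin.
Qed.

Lemma argmax_ex (V : nat -> nat) N : 0 < N -> exists k, k < N /\
  forall t, t < N -> V t <= V k /\ (V t = V k -> t <= k).
Proof.
elim: N => [|N IH] // _.
case: N IH => [|N] IH.
  by exists 0; split => // t; rewrite ltnS leqn0 => /eqP ->; split.
have [k [hk H]] := IH isT.
case: (leqP (V k) (V N.+1)) => hv.
  exists N.+1; split => // t ht0; case: (ltnP t N.+1) => ht; last first.
    have -> : t = N.+1 by apply/eqP; rewrite eqn_leq ht andbT -ltnS.
    by split.
  have [h1 h2] := H t ht; split; first exact: leq_trans hv.
  by move=> _; apply: ltnW.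
exists k; split; first by apply: (leq_trans hk).
move=> t ht0; case: (ltnP t N.+1) => ht; first exact: H.
have -> : t = N.+1 by apply/eqP; rewrite eqn_leq ht andbT -ltnS.
split; first exact: ltnW.
by move=> e; move: hv; rewrite e ltnn.
Qed.

Definition goodP (P : nat -> nat) n k := all (fun j => P (k + j) < P k + 2 * j) (iota 1 n).

Lemma raney_uniq (P : nat -> nat) n k1 k2 :
  (forall r, r < n -> P (n + r) + 1 = P r + 2 * n) ->
  k1 < k2 -> k2 < n -> goodP P n k1 -> goodP P n k2 -> False.
Proof.
move=> HP h12 h2n g1 g2.
have := allP g1 (k2 - k1); rewrite mem_iota subn_gt0 h12 add1n ltnS.
rewrite (subnKC (ltnW h12)) => /(_ (leq_trans (leq_subr _ _) (ltnW h2n))) A.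
have := allP g2 (n + k1 - k2); rewrite mem_iota.
have e : k2 + (n + k1 - k2) = n + k1.
  by rewrite subnKC // (leq_trans (ltnW h2n)) // leq_addr.
rewrite e => B.
have B' : P (n + k1) < P k2 + 2 * (n + k1 - k2).
  apply: B; move: h12 h2n; clear; move=> h12 h2n; apply/andP; split.
  tolia. tolia.
have C := HP k1 (ltn_trans h12 h2n).
move: A B' C h12 h2n; clear; move=> A B C h12 h2n; tolia.
Qed.

Lemma raney (P : nat -> nat) n : 0 < n ->
  (forall r, r < n -> P (n + r) + 1 = P r + 2 * n) ->
  exists k, k < n /\ goodP P n k /\ forall k', k' < n -> goodP P n k' -> k' = k.
Proof.
move=> hn HP.
have [k [hk H]] := argmax_ex (fun t => P t + 2 * (n - t)) hn.
have gk : goodP P n k.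
  apply/allP => j; rewrite mem_iota add1n ltnS => /andP [hj1 hj2].
  case: (ltnP (k + j) n) => hkj.
    have [h1 h2] := H _ hkj.
    have hne : P (k + j) + 2 * (n - (k + j)) <> P k + 2 * (n - k).
      by move=> /h2; rewrite -[X in _ <= X]addn0 leq_add2l leqNgt hj1.
    move: h1 hne hkj hj1; clear; move=> h1 hne hkj hj1; tolia.
  set r := k + j - n.
  have hr : k + j = n + r by rewrite /r subnKC.
  have hrk : r <= k by rewrite /r leq_subLR addnC leq_add2r.
  have hrn : r < n by apply: leq_ltn_trans hrk hk.
  have [h1 _] := H _ hrn.
  have C := HP r hrn.
  rewrite hr; move: h1 C hrk hr hj2 hk hrn; clear; move=> h1 C hrk hr hj2 hk hrn; tolia.
exists k; split => //; split => // k' hk' gk'.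
case: (ltngtP k' k) => // h.
  by case: (raney_uniq HP h hk gk' gk).
by case: (raney_uniq HP h hk' gk gk').
Qed.

Definition Pc s (c : seq bool) t :=
  count (fun i => nth false c (i %% size c)) (iota 0 ((s+2)*t)).

Lemma take_count (c : seq bool) T : T <= size c ->
  count id (take T c) = count (fun i => nth false c (i %% size c)) (iota 0 T).
Proof.
move=> hT.
have -> : take T c = map (nth false c) (iota 0 T).
  apply: (@eq_from_nth _ false); first by rewrite size_takel ?size_map ?size_iota.
  move=> i; rewrite size_takel // => hi.
  by rewrite nth_take // (nth_map 0) ?size_iota // nth_iota.
rewrite count_map; apply: eq_in_count => i; rewrite mem_iota add0n => /andP [_ hi] /=.
by rewrite modn_small // (leq_trans hi hT).
Qed.

Lemma Pc_shift s n (c : seq bool) k j : size c = (s+2)*n -> 0 < n -> k <= n ->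
  Pc s c (k + j) = Pc s c k + Pc s (rot ((s+2)*k) c) j.
Proof.
move=> hc hn hk.
have hm : 0 < size c by rewrite hc muln_gt0 hn andbT addn2.
have hBk : (s+2)*k <= size c by rewrite hc leq_mul2l hk orbT.
rewrite /Pc mulnDr iotaD count_cat add0n; congr (_ + _).
rewrite -[X in iota X]addn0 iotaDl count_map size_rot; apply: eq_count => i /=.
by rewrite nth_rot // ?ltn_pmod // modnDml addnC.
Qed.

Lemma Pc_full s n (c : seq bool) : size c = (s+2)*n -> Pc s c n = count id c.
Proof.
move=> hc; rewrite /Pc -hc -(take_count (leqnn _)) take_size //.
Qed.

Lemma Pc_period s n (c : seq bool) r : size c = (s+2)*n -> 0 < n ->
  count id c = 2 * n - 1 -> Pc s c (n + r) + 1 = Pc s c r + 2 * n.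
Proof.
move=> hc hn hcnt.
rewrite (Pc_shift r hc hn (leqnn n)) -hc rot_size (Pc_full hc) hcnt.
move: hn; clear; move=> hn; tolia.
Qed.

Lemma good_rot s n (c : seq bool) k : size c = (s+2)*n -> 0 < n -> k <= n ->
  goodc s n (rot ((s+2)*k) c) = goodP (Pc s c) n k.
Proof.
move=> hc hn hk; apply: eq_in_all => j; rewrite mem_iota add1n ltnS => /andP [_ hj].
rewrite take_count; last by rewrite size_rot hc leq_mul2l hj orbT.
by rewrite (Pc_shift j hc hn hk) ltn_add2l.
Qed.

Lemma card_sumb (T : finType) (P : pred T) : #|P| = \sum_(x : T) (P x : nat).
Proof. rewrite -sum1_card big_mkcond; apply: eq_bigr => x _; rewrite unfold_in; by case: (P x). Qed.

Lemma count_rot_id x (c : seq bool) : count id (rot x c) = count id c.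
Proof. by apply/permP; rewrite perm_rot perm_refl. Qed.

Lemma step2 s n : 0 < n ->
  n * #|[pred c : ((s+2)*n).-tuple bool | (count id c == 2*n-1) && goodc s n c]|
  = #|[pred c : ((s+2)*n).-tuple bool | count id c == 2*n-1]|.
Proof.
move=> hn; set m := (s+2)*n.
symmetry; rewrite card_sumb.
transitivity (\sum_(c : m.-tuple bool) \sum_(k < n)
    ((count id c == 2*n-1) && goodc s n (rot ((s+2)*k) c) : nat)); last first.
  rewrite exchange_big /=.
  transitivity (\sum_(k < n) #|[pred c : m.-tuple bool | (count id c == 2*n-1) && goodc s n c]|); last first.
    by rewrite big_const_ord iter_addn_0 mulnC.
  apply/esym.
  apply: eq_bigr => k _; rewrite card_sumb.
  rewrite (reindex_inj (h := fun c : m.-tuple bool => rot_tuple ((s+2)*k) c)) /=.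
    by apply: eq_bigr => c _; rewrite count_rot_id.
  by move=> c1 c2 /(congr1 val) /= /rot_inj h; apply: val_inj.
apply: eq_bigr => c _; rewrite inE.
case hc: (count id c == 2*n-1) => /=; last by apply/esym/big1 => k _.
have hsz : size c = (s+2)*n by rewrite size_tuple.
have [k [hk [gk uk]]] := raney hn (fun r _ => Pc_period r hsz hn (eqP hc)).
rewrite -(card_sumb [pred k0 : 'I_n | goodc s n (rot ((s+2)*k0) c)]).
apply/esym/(@eq_card1 _ (Ordinal hk)) => k0; rewrite !unfold_in /=.
rewrite (good_rot hsz hn (ltnW (ltn_ord k0))).
apply/idP/eqP => [g|->]; first by apply: val_inj => /=; exact: (uk _ (ltn_ord k0) g).
exact gk.
Qed.

Lemma card_tnth m (c : m.-tuple bool) : #|[set i : 'I_m | tnth c i]| = count id c.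
Proof.
rewrite -sum1_count big_tuple cardsE -sum1_card.
by apply: eq_bigl => i; rewrite !unfold_in.
Qed.

Lemma step3 m K : #|[pred c : m.-tuple bool | count id c == K]| = 'C(m, K).
Proof.
have := card_draws 'I_m K; rewrite card_ord => <-.
rewrite (card_sumb [pred c : m.-tuple bool | count id c == K]).
have -> : #|[set A : {set 'I_m} | #|A| == K]| = \sum_(A : {set 'I_m}) (#|A| == K : nat).
  by rewrite -sum1_card big_mkcond; apply: eq_bigr => A _; rewrite inE; case: (_ == _).
rewrite (reindex (fun c : m.-tuple bool => [set i : 'I_m | tnth c i])).
  by apply: eq_bigr => c _; rewrite /= card_tnth.
apply: onW_bij.
exists (fun S : {set 'I_m} => [tuple (i \in S) | i < m]) => [c | S].
  by apply: eq_from_tnth => i; rewrite tnth_mktuple inE.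
by apply/setP => i; rewrite inE tnth_mktuple.
Qed.

Lemma gT_proof s n (c : ((s+2)*n).-tuple bool) : size (gb c) == (s+2)*n + 1.
Proof. by rewrite size_gb size_tuple addn1. Qed.

Definition gT s n (c : ((s+2)*n).-tuple bool) : ((s+2)*n + 1).-tuple bool :=
  Tuple (gT_proof c).

Lemma gT_inj s n : injective (@gT s n).
Proof.
move=> c1 c2 /(congr1 val) /= /(congr1 db); rewrite !db_gb => h.
by apply: val_inj.
Qed.

Lemma dT_proof s n (b : ((s+2)*n + 1).-tuple bool) : size (db b) == (s+2)*n.
Proof. by rewrite size_db size_tuple addn1. Qed.

Lemma step1 s n : 1 <= n ->
  #|[pred t : ((s+2)*n+1).-tuple bool | admissibleb s t && (changes t == 2*n-1)]|
  = #|[pred c : ((s+2)*n).-tuple bool | (count id c == 2*n-1) && goodc s n c]|.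
Proof.
move=> hn.
rewrite -(card_imset _ (@gT_inj s n)); apply: eq_card => b.
rewrite [in LHS]unfold_in /=.
rewrite (charA hn (size_tuple b)).
apply/idP/imsetP.
  move=> /and3P [hx hc hg].
  exists (Tuple (dT_proof b)); first by rewrite unfold_in /= hc hg.
  apply: val_inj => /=; rewrite gb_db ?(eqP hx) // size_tuple addn1 //.
move=> [c]; rewrite unfold_in /= => /andP [hc hg] ->.
by rewrite /= bit_gb1 db_gb hc hg.
Qed.

Lemma binid s n N : 1 <= n -> n * N = 'C((s + 2) * n, 2 * n - 1) ->
  N + s * 'C((s + 2) * n - 1, 2 * n - 2) = 2 * 'C((s + 2) * n - 1, 2 * n - 1).
Proof.
move=> hn E.
have hk : (2*n-2).+1 = 2*n-1 by move: hn; clear; move=> hn; tolia.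
have hm : ((s+2)*n-1).+1 = (s+2)*n by move: hn; clear; move=> hn; tolia.
have E0 := binS ((s+2)*n-1) (2*n-2); rewrite hk hm in E0.
have E2 := mul_bin_left ((s+2)*n-1) (2*n-2); rewrite hk in E2.
have hd : (s+2)*n-1 - (2*n-2) = s*n+1 by move: hn; clear; move=> hn; tolia.
rewrite hd in E2.
rewrite E0 in E.
move: E E2 hn.
set a := 'C(_, 2*n-2); set b := 'C(_, 2*n-1).
clear; move=> E E2 hn.
apply/eqP; rewrite -(eqn_pmul2l hn); apply/eqP.
move/leP: hn => hn.
rewrite -!multE -!plusE -!minusE in E E2 *.
nia.
Qed.

Theorem mainTheorem7 (n s : nat) (hn : 1 <= n) :
  let L := (s + 2) * n + 1 in
  let N := #|[pred t : L.-tuple bool |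
                admissibleb s t && (changes t == 2 * n - 1)]| in
  (n * N = 'C((s + 2) * n, 2 * n - 1)
   /\ N + s * 'C((s + 2) * n - 1, 2 * n - 2)
        = 2 * 'C((s + 2) * n - 1, 2 * n - 1))
  /\ (forall b : seq bool, size b = L -> admissibleb s b ->
        changes b <= 2 * n - 1).
Proof.
move=> L N.
have E : n * N = 'C((s + 2) * n, 2 * n - 1).
  by rewrite /N /L (step1 _ hn) (step2 s hn) step3.
split; first by split => //; apply: binid.
by move=> b hb hadm; apply: part2 hn hb hadm.
Qed.
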